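(* Let $D\in\{0,1\}$, and let $M(0),M(1)\in\{0,1\}$ and $Y(d,m)\in\{0,1\}$ for $d,m\in\{0,1\}$ be random variables such that $D$, $\{M(0),M(1)\}$ and $\{Y(0,0),Y(0,1),Y(1,0),Y(1,1)\}$ are mutually independent, and such that $Y(0,0)=Y(1,0)=0$ almost surely. Define $M=M(D)$, $Y(d)=Y(d,M(d))$ and $Y=Y(D)$. Let $\beta_M=\mathbb{E}[M(1)-M(0)]$, $\beta_Y=\mathbb{E}[Y(1,1)-Y(0,1)]$, and define the principal stratum $S$ by $S=\mathrm{al}$ if $M(0)=M(1)=1$, $S=\mathrm{mi}$ if $M(0)=0,M(1)=1$, $S=\mathrm{ma}$ if $M(0)=1,M(1)=0$, $S=\mathrm{ne}$ if $M(0)=M(1)=0$. Let $$\boldsymbol\theta=\begin{pmatrix}\mathbb{E}[Y(1)-Y(0)\mid S=\mathrm{al}]\\ \mathbb{E}[Y(1)-Y(0)\mid S=\mathrm{mi}]\\ \mathbb{E}[Y(1)-Y(0)\mid S=\mathrm{ma}]\\ \mathbb{E}[Y(1)-Y(0)\mid S=\mathrm{ne}]\end{pmatrix}=\begin{pmatrix}\beta_Y\\ \beta_Y+\mathbb{E}[Y(0,1)]\\ -\mathbb{E}[Y(0,1)]\\ 0\end{pmatrix}$$ (where the conditional expectations are defined). Then, whenever the relevant conditioning events have positive probability, each of the estimands $\mathrm{ATE}_{M=1}=\mathbb{E}[Y(1)-Y(0)\mid M=1]$, $\mathrm{ATT}_{M=1}=\mathbb{E}[Y(1)-Y(0)\mid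 D=1,M=1]$, $\mathrm{ATE}=\mathbb{E}[Y(1)-Y(0)]$ and $\mathrm{ATT}=\mathbb{E}[Y(1)-Y(0)\mid D=1]$ equals $(\mathbf{w}^T\boldsymbol\theta)/(\mathbf{w}^T\mathbf{1})$, where $\mathbf 1$ is the all-ones vector and the weight vector $\mathbf w$ is, respectively, $$\mathbf{w}(\mathrm{ATE}_{M=1})=\begin{pmatrix}P(S=\mathrm{al})\\ [P(S=\mathrm{ma})+\beta_M]\,P(D=1)\\ P(S=\mathrm{ma})\,P(D=0)\\ 0\end{pmatrix},\quad \mathbf{w}(\mathrm{ATT}_{M=1})=\begin{pmatrix}P(S=\mathrm{al})\\ P(S=\mathrm{ma})+\beta_M\\ 0\\ 0\end{pmatrix},$$ $$\mathbf{w}(\mathrm{ATE})=\mathbf{w}(\mathrm{ATT})=\begin{pmatrix}P(S=\mathrm{al})\\ P(S=\mathrm{mi})\\ P(S=\mathrm{ma})\\ P(S=\mathrm{ne})\end{pmatrix}=\begin{pmatrix}P(S=\mathrm{al})\\ P(S=\mathrm{ma})+\beta_M\\ P(S=\mathrm{ma})\\ P(S=\mathrm{ne})\end{pmatrix}.$$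
   Context: Setting: each unit is a police–civilian encounter. $D$ is the civilian's race ($D=1$ minority), $M(d)$ the potential indicator of detainment/stop under race $d$, $Y(d,m)$ the potential indicator of police use of force under race $d$ and detainment status $m$. The variables arise from a nonparametric structural equation model with independent errors $D=f_D(\epsilon_D)$, $M=f_M(D,\epsilon_M)$, $Y=f_Y(D,M,\epsilon_Y)$ with $M(d)=f_M(d,\epsilon_M)$, $Y(d,m)=f_Y(d,m,\epsilon_Y)$, which yields the stated mutual independence. The condition $Y(0,0)=Y(1,0)=0$ (''mandatory reporting'', part (i)) says there is no use of force without a stop. No monotonicity $M(1)\ge M(0)$ is assumed. *)

(* Defs.v *)
From mathcomp Require Import all_boot all_order all_algebra.
From mathcomp Require Import all_classical all_reals all_analysis.
Set Implicit Arguments. Unset Strict Implicit. Unset Printing Implicit Defensive.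
Import Order.TTheory GRing.Theory Num.Theory.
Local Open Scope classical_set_scope.
Local Open Scope ring_scope.

Section Defs.
Context (d : measure_display) (T : measurableType d) (R : realType)
  (P : probability T R).

Definition Pr (A : set T) : R := fine (P A).

(* a {0,1}-valued random variable, represented as a bool-valued function *)
Definition rv_bool (X : T -> bool) : Prop := measurable [set t | X t].


Definition Ex (Z : T -> R) : R := fine (\int[P]_x (Z x)%:E).

Definition CondEx (Z : T -> R) (A : set T) : R :=
  fine (\int[P]_(x in A) (Z x)%:E) / Pr A.

(* mutual independence of the random elements D, (M0,M1), (Y00,Y01,Y10,Y11)
   with finite codomains (all subsets measurable) *)
Definition indep3 (D : T -> bool) (MM : T -> bool * bool)
  (YY : T -> bool * bool * bool * bool) : Prop :=
  forall (A : set bool) (B : set (bool * bool))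
         (C : set (bool * bool * bool * bool)),
    Pr ([set t | A (D t)] `&` [set t | B (MM t)] `&` [set t | C (YY t)])
    = Pr [set t | A (D t)] * Pr [set t | B (MM t)] * Pr [set t | C (YY t)].
End Defs.

Definition ind {R : realType} {T : Type} (X : T -> bool) : T -> R :=
  fun t => (X t)%:R.

Definition wratio (R : realType) (w1 w2 w3 w4 t1 t2 t3 t4 : R) : R :=
  (w1 * t1 + w2 * t2 + w3 * t3 + w4 * t4) / (w1 + w2 + w3 + w4).

(* Main.v *)
Require Import Defs.
From mathcomp Require Import all_boot all_order all_algebra.
From mathcomp Require Import all_classical all_reals all_analysis.
From mathcomp Require Import ring lra.
Import Order.TTheory GRing.Theory Num.Theory.
Local Open Scope classical_set_scope.
Local Open Scope ring_scope.
Set Implicit Arguments. Unset Strict Implicit.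

Lemma preimV_meas d (T : measurableType d) (U : finType) (V : T -> U) :
  (forall u, measurable (V @^-1` [set u])) -> forall B, measurable (V @^-1` B).
Proof.
move=> mV B.
have -> : V @^-1` B = \bigcup_(u in B) V @^-1` [set u].
  by apply/seteqP; split => [t Bt | t [u Bu /= ->]] //; exists (V t).
by apply: fin_bigcup_measurable => //; exact: finite_finset.
Qed.

Lemma intV d (T : measurableType d) (R : realType) (P : probability T R)
  (U : finType) (V : T -> U) (g : U -> R) (A : set T) :
  (forall u, measurable (V @^-1` [set u])) -> measurable A ->
  (\int[P]_(x in A) (g (V x))%:E)%E
  = (\sum_(u : U) g u * Pr P (A `&` V @^-1` [set u]))%:E.
Proof.
move=> mV mA.
have AE : A = \big[setU/set0]_(u <- index_enum U) (A `&` V @^-1` [set u]).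
  rewrite -bigcup_seq; apply/seteqP; split => [t At | t [u _ [At _]]] //.
  by exists (V t) => //=; rewrite mem_index_enum.
rewrite {1}AE integral_bigsetU_EFin //.
- rewrite -sumEFin; apply: eq_bigr => u _.
  rewrite (eq_integral (fun _ => (g u)%:E)); last first.
    by move=> t /set_mem [_ /= ->].
  rewrite integral_cst; last exact: measurableI.
  rewrite EFinM /Pr fineK //; exact: fin_num_measure (measurableI _ _ mA (mV u)).
- by move=> u; apply: measurableI.
- exact: index_enum_uniq.
- by move=> u v _ _ [t [[_ /= Hu] [_ /= Hv]]]; rewrite -Hu -Hv.
- move=> mD Y mY; apply: measurableI => //.
  by have := @preimV_meas _ _ _ _ mV (fun u => Y (g u)%:E).
Qed.

Lemma intE d (T : measurableType d) (R : realType) (P : probability T R)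
  (U : finType) (V : T -> U) (mV : forall u, measurable (V @^-1` [set u]))
  (p : U -> R) (pE : forall u, Pr P (V @^-1` [set u]) = p u)
  (a : pred U) (g : U -> R) :
  fine (\int[P]_(x in [set t | a (V t)]) (g (V x))%:E)%E
  = \sum_(u : U) (g u * (a u)%:R) * p u.
Proof.
have mA : measurable [set t | a (V t)].
  exact: (@preimV_meas _ _ _ _ mV [set u | a u]).
rewrite intV //=; apply: eq_bigr => u _; rewrite -mulrA -pE; congr (_ * _).
case Hau: (a u).
  rewrite mul1r; congr (Pr P _); apply/seteqP; split => t /=; first by case.
  by move=> Vt; split => //; rewrite Vt.
rewrite mul0r (_ : _ `&` _ = set0) /Pr ?measure0 //.
by apply/seteqP; split => t //= [aVt Vt]; move: aVt; rewrite Vt Hau.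
Qed.

Lemma intT d (T : measurableType d) (R : realType) (P : probability T R)
  (U : finType) (V : T -> U) (mV : forall u, measurable (V @^-1` [set u]))
  (p : U -> R) (pE : forall u, Pr P (V @^-1` [set u]) = p u) (g : U -> R) :
  fine (\int[P]_x (g (V x))%:E)%E = \sum_(u : U) g u * p u.
Proof.
rewrite intV //=; apply: eq_bigr => u _; rewrite -pE setTI //.
Qed.

Lemma prE d (T : measurableType d) (R : realType) (P : probability T R)
  (U : finType) (V : T -> U) (mV : forall u, measurable (V @^-1` [set u]))
  (p : U -> R) (pE : forall u, Pr P (V @^-1` [set u]) = p u) (a : pred U) :
  Pr P [set t | a (V t)] = \sum_(u : U) (a u)%:R * p u.
Proof.
have mA : measurable [set t | a (V t)].
  exact: (@preimV_meas _ _ _ _ mV [set u | a u]).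
have := intE mV pE a (fun _ => 1).
rewrite (eq_integral (cst 1%E)) // integral_cst // mul1e => H.
rewrite /Pr H; by apply: eq_bigr => u _; rewrite mul1r.
Qed.

Lemma prT d (T : measurableType d) (R : realType) (P : probability T R)
  (U : finType) (V : T -> U) (mV : forall u, measurable (V @^-1` [set u])) :
  \sum_(u : U) Pr P (V @^-1` [set u]) = 1.
Proof.
have := prE (P:=P) mV (fun u => erefl) (fun _ => true).
rewrite (_ : [set t | true] = setT); last by apply/seteqP; split.
rewrite /Pr probability_setT /= => ->.
by apply: eq_bigr => u _; rewrite mul1r.
Qed.

Lemma measb d (T : measurableType d) (X : T -> bool) :
  measurable [set t | X t] -> forall b, measurable [set t | X t = b].
Proof.
move=> mX [] //.
have -> : [set t | X t = false] = ~` [set t | X t].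
  by apply/seteqP; split => t /=; case: (X t).
exact: measurableC.
Qed.

Lemma Pr_le d (T : measurableType d) (R : realType) (P : probability T R)
  (A B : set T) : measurable A -> measurable B -> A `<=` B -> Pr P A <= Pr P B.
Proof.
move=> mA mB AB; rewrite /Pr; apply: fine_le; try exact: fin_num_measure.
by apply: le_measure => //; rewrite inE.
Qed.

Lemma Pr_ge0 d (T : measurableType d) (R : realType) (P : probability T R)
  (A : set T) : 0 <= Pr P A.
Proof. by apply: fine_ge0; apply: measure_ge0. Qed.

Lemma sum_pair (R : realType) (I J : finType) (F : I * J -> R) :
  \sum_(p : I * J) F p = \sum_(i : I) \sum_(j : J) F (i, j).
Proof.
rewrite (pair_big xpredT xpredT (fun i j => F (i, j))) /=.
by apply: eq_bigr => -[].
Qed.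

Lemma sum2 (R : realType) (F : bool * bool -> R) :
  \sum_(p : bool * bool) F p = F (true, true) + F (true, false) + (F (false, true) + F (false, false)).
Proof. by rewrite sum_pair !big_bool. Qed.

Lemma sum4 (R : realType) (F : bool * bool * bool * bool -> R) :
  \sum_(p : bool * bool * bool * bool) F p = (((F (true, true, true, true) + F (true, true, true, false)) + (F (true, true, false, true) + F (true, true, false, false))) + ((F (true, false, true, true) + F (true, false, true, false)) + (F (true, false, false, true) + F (true, false, false, false))) + (((F (false, true, true, true) + F (false, true, true, false)) + (F (false, true, false, true) + F (false, true, false, false))) + ((F (false, false, true, true) + F (false, false, true, false)) + (F (false, false, false, true) + F (false, false, false, false))))).
Proof. by rewrite sum_pair sum_pair sum2 !big_bool. Qed.

Definition Uty := (bool * (bool * bool) * (bool * bool * bool * bool))%type.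

Lemma sumU (R : realType) (F : Uty -> R) :
  \sum_(u : Uty) F u = ((\sum_(c : bool * bool * bool * bool) F (true, (true, true), c) + \sum_(c : bool * bool * bool * bool) F (true, (true, false), c) + (\sum_(c : bool * bool * bool * bool) F (true, (false, true), c) + \sum_(c : bool * bool * bool * bool) F (true, (false, false), c))) + (\sum_(c : bool * bool * bool * bool) F (false, (true, true), c) + \sum_(c : bool * bool * bool * bool) F (false, (true, false), c) + (\sum_(c : bool * bool * bool * bool) F (false, (false, true), c) + \sum_(c : bool * bool * bool * bool) F (false, (false, false), c)))).
Proof. by rewrite sum_pair sum_pair big_bool !sum2. Qed.

Lemma expand (R : realType) (F : Uty -> R) (q : bool -> R) (m : bool * bool -> R)
  (y : bool * bool * bool * bool -> R) :
  \sum_(u : Uty) F u * (q u.1.1 * m u.1.2 * (if u.2.1.1.1 || u.2.1.2 then 0 else y u.2))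
  = F (true, (true, true), (false, true, false, true)) * (q true * m (true, true) * y (false, true, false, true))
  + F (true, (true, true), (false, true, false, false)) * (q true * m (true, true) * y (false, true, false, false))
  + F (true, (true, true), (false, false, false, true)) * (q true * m (true, true) * y (false, false, false, true))
  + F (true, (true, true), (false, false, false, false)) * (q true * m (true, true) * y (false, false, false, false))
  + F (true, (true, false), (false, true, false, true)) * (q true * m (true, false) * y (false, true, false, true))
  + F (true, (true, false), (false, true, false, false)) * (q true * m (true, false) * y (false, true, false, false))
  + F (true, (true, false), (false, false, false, true)) * (q true * m (true, false) * y (false, false, false, true))
  + F (true, (true, false), (false, false, false, false)) * (q true * m (true, false) * y (false, false, false, false))
  + F (true, (false, true), (false, true, false, true)) * (q true * m (false, true) * y (false, true, false, true))
  + F (true, (false, true), (false, true, false, false)) * (q true * m (false, true) * y (false, true, false, false))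
  + F (true, (false, true), (false, false, false, true)) * (q true * m (false, true) * y (false, false, false, true))
  + F (true, (false, true), (false, false, false, false)) * (q true * m (false, true) * y (false, false, false, false))
  + F (true, (false, false), (false, true, false, true)) * (q true * m (false, false) * y (false, true, false, true))
  + F (true, (false, false), (false, true, false, false)) * (q true * m (false, false) * y (false, true, false, false))
  + F (true, (false, false), (false, false, false, true)) * (q true * m (false, false) * y (false, false, false, true))
  + F (true, (false, false), (false, false, false, false)) * (q true * m (false, false) * y (false, false, false, false))
  + F (false, (true, true), (false, true, false, true)) * (q false * m (true, true) * y (false, true, false, true))
  + F (false, (true, true), (false, true, false, false)) * (q false * m (true, true) * y (false, true, false, false))
  + F (false, (true, true), (false, false, false, true)) * (q false * m (true, true) * y (false, false, false, true))
  + F (false, (true, true), (false, false, false, false)) * (q false * m (true, true) * y (false, false, false, false))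
  + F (false, (true, false), (false, true, false, true)) * (q false * m (true, false) * y (false, true, false, true))
  + F (false, (true, false), (false, true, false, false)) * (q false * m (true, false) * y (false, true, false, false))
  + F (false, (true, false), (false, false, false, true)) * (q false * m (true, false) * y (false, false, false, true))
  + F (false, (true, false), (false, false, false, false)) * (q false * m (true, false) * y (false, false, false, false))
  + F (false, (false, true), (false, true, false, true)) * (q false * m (false, true) * y (false, true, false, true))
  + F (false, (false, true), (false, true, false, false)) * (q false * m (false, true) * y (false, true, false, false))
  + F (false, (false, true), (false, false, false, true)) * (q false * m (false, true) * y (false, false, false, true))
  + F (false, (false, true), (false, false, false, false)) * (q false * m (false, true) * y (false, false, false, false))
  + F (false, (false, false), (false, true, false, true)) * (q false * m (false, false) * y (false, true, false, true))
  + F (false, (false, false), (false, true, false, false)) * (q false * m (false, false) * y (false, true, false, false))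
  + F (false, (false, false), (false, false, false, true)) * (q false * m (false, false) * y (false, false, false, true))
  + F (false, (false, false), (false, false, false, false)) * (q false * m (false, false) * y (false, false, false, false)).
Proof.
rewrite sumU !sum4 /=.
ring.
Qed.

Theorem propositionA1 (d : measure_display) (T : measurableType d)
  (R : realType) (P : probability T R)
  (D M0 M1 Y00 Y01 Y10 Y11 : T -> bool) :
  rv_bool D -> rv_bool M0 -> rv_bool M1 ->
  rv_bool Y00 -> rv_bool Y01 -> rv_bool Y10 -> rv_bool Y11 ->
  indep3 P D (fun t => (M0 t, M1 t)) (fun t => (Y00 t, Y01 t, Y10 t, Y11 t)) ->
  (* mandatory reporting: Y(0,0) = Y(1,0) = 0 almost surely *)
  Pr P [set t | Y00 t || Y10 t] = 0 ->
  let M := fun t => if D t then M1 t else M0 t in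
  let Y1 := fun t => if M1 t then Y11 t else Y10 t in  (* Y(1) = Y(1,M(1)) *)
  let Y0 := fun t => if M0 t then Y01 t else Y00 t in  (* Y(0) = Y(0,M(0)) *)
  let tau := fun t => ind Y1 t - ind Y0 t in           (* Y(1) - Y(0) *)
  let betaM := Ex P (fun t => ind M1 t - ind M0 t) in
  let betaY := Ex P (fun t => ind Y11 t - ind Y01 t) in
  let EY01 := Ex P (ind Y01) in
  let Sal := [set t | M0 t && M1 t] in
  let Smi := [set t | ~~ M0 t && M1 t] in
  let Sma := [set t | M0 t && ~~ M1 t] in
  let Sne := [set t | ~~ M0 t && ~~ M1 t] in
  let pD1 := Pr P [set t | D t] in
  let pD0 := Pr P [set t | ~~ D t] in
  let th1 := betaY in
  let th2 := betaY + EY01 in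
  let th3 := - EY01 in
  let th4 := 0 in
  (* theta: principal-stratum effects, where defined *)
  (0 < Pr P Sal -> CondEx P tau Sal = th1) /\
  (0 < Pr P Smi -> CondEx P tau Smi = th2) /\
  (0 < Pr P Sma -> CondEx P tau Sma = th3) /\
  (0 < Pr P Sne -> CondEx P tau Sne = th4) /\
  (* P(S = mi) = P(S = ma) + beta_M *)
  Pr P Smi = Pr P Sma + betaM /\
  (* ATE_{M=1} *)
  (0 < Pr P [set t | M t] ->
     CondEx P tau [set t | M t]
     = wratio (Pr P Sal) ((Pr P Sma + betaM) * pD1) (Pr P Sma * pD0) 0
              th1 th2 th3 th4) /\
  (* ATT_{M=1} *)
  (0 < Pr P [set t | D t && M t] ->
     CondEx P tau [set t | D t && M t]
     = wratio (Pr P Sal) (Pr P Sma + betaM) 0 0 th1 th2 th3 th4) /\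
  (* ATE *)
  Ex P tau = wratio (Pr P Sal) (Pr P Smi) (Pr P Sma) (Pr P Sne) th1 th2 th3 th4 /\
  (* ATT *)
  (0 < pD1 ->
     CondEx P tau [set t | D t]
     = wratio (Pr P Sal) (Pr P Smi) (Pr P Sma) (Pr P Sne) th1 th2 th3 th4).

Proof.
move=> mD mM0 mM1 mY00 mY01 mY10 mY11 ind0 Y0a M Y1 Y0 tau betaM betaY EY01
  Sal Smi Sma Sne pD1 pD0 th1 th2 th3 th4.
pose V := fun t => (D t, (M0 t, M1 t), (Y00 t, Y01 t, Y10 t, Y11 t)).
pose q a := Pr P [set t | D t = a].
pose mm b := Pr P [set t | (M0 t, M1 t) = b].
pose yy c := Pr P [set t | (Y00 t, Y01 t, Y10 t, Y11 t) = c].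
have mMM : forall b, measurable [set t | (M0 t, M1 t) = b].
  move=> [b1 b2].
  rewrite (_ : [set t | _] = [set t | M0 t = b1] `&` [set t | M1 t = b2]).
    by apply: measurableI; apply: measb.
  by apply/seteqP; split => t /=; case=> -> ->.
have mYY : forall c, measurable [set t | (Y00 t, Y01 t, Y10 t, Y11 t) = c].
  move=> [[[c1 c2] c3] c4].
  rewrite (_ : [set t | _] = [set t | Y00 t = c1] `&` [set t | Y01 t = c2]
     `&` [set t | Y10 t = c3] `&` [set t | Y11 t = c4]).
    by repeat apply: measurableI; apply: measb.
  by apply/seteqP; split => t /=; [case=> -> -> -> -> | case=> [[[-> ->] ->] ->]].
have VE : forall a b c, V @^-1` [set (a, b, c)] =
   [set t | [set a] (D t)] `&` [set t | [set b] (M0 t, M1 t)]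
   `&` [set t | [set c] (Y00 t, Y01 t, Y10 t, Y11 t)].
  move=> a b c; apply/seteqP; split => t; rewrite /V /=; first by case=> -> -> ->.
  by case=> [[-> ->] ->].
have mV : forall u, measurable (V @^-1` [set u]).
  move=> [[a b] c]; rewrite VE; apply: measurableI; last exact: mYY.
  by apply: measurableI; [exact: measb | exact: mMM].
have mY0 : measurable [set t | Y00 t || Y10 t].
  rewrite (_ : [set t | _] = [set t | Y00 t] `|` [set t | Y10 t]).
    exact: measurableU.
  by apply/seteqP; split => t /=; [move/orP|move=> H; apply/orP].
have yy0 : forall c, c.1.1.1 || c.1.2 -> yy c = 0.
  move=> c H.
  apply/eqP; rewrite eq_le; apply/andP; split; last exact: Pr_ge0.
  rewrite -Y0a; apply: Pr_le => //.
  by move=> t /= Ht; rewrite -Ht /= in H.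
have pE : forall u, Pr P (V @^-1` [set u])
    = q u.1.1 * mm u.1.2 * (if u.2.1.1.1 || u.2.1.2 then 0 else yy u.2).
  move=> [[a b] c]; rewrite VE ind0 -/(q a) -/(mm b) -/(yy c) /=.
  by case: ifP => // H; rewrite (yy0 c H).
have hq : q true + q false = 1.
  by have := prT P (V:=D) (fun b => measb mD b); rewrite big_bool.
have hm : mm (true, true) + mm (true, false) + (mm (false, true) + mm (false, false)) = 1.
  by have := prT P (V:=fun t => (M0 t, M1 t)) mMM; rewrite sum2.
have hy : yy (false, true, false, true) + yy (false, true, false, false)
   + (yy (false, false, false, true) + yy (false, false, false, false)) = 1.
  have <- : \sum_(c : bool * bool * bool * bool) yy c = 1 :=
    prT P (V:=fun t => (Y00 t, Y01 t, Y10 t, Y11 t)) mYY.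
  rewrite sum4 (yy0 (true, true, true, true) erefl) (yy0 (true, true, true, false) erefl) (yy0 (true, true, false, true) erefl) (yy0 (true, true, false, false) erefl) (yy0 (true, false, true, true) erefl) (yy0 (true, false, true, false) erefl) (yy0 (true, false, false, true) erefl) (yy0 (true, false, false, false) erefl) (yy0 (false, true, true, true) erefl) (yy0 (false, true, true, false) erefl) (yy0 (false, false, true, true) erefl) (yy0 (false, false, true, false) erefl) //=.
  ring.
have hq' : q false = 1 - q true by lra.
have hm' : mm (false, false) = 1 - mm (true, true) - mm (true, false) - mm (false, true) by lra.
have hy' : yy (false, false, false, false) = 1 - yy (false, true, false, true)
   - yy (false, true, false, false) - yy (false, false, false, true) by lra.
pose gtau (u : bool * (bool * bool) * (bool * bool * bool * bool)) :=
  (if u.1.2.2 then u.2.2 else u.2.1.2)%:R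
  - (if u.1.2.1 then u.2.1.1.2 else u.2.1.1.1)%:R : R.
have eSal : Pr P Sal = mm (true, true).
  by rewrite (prE mV pE (fun u => u.1.2.1 && u.1.2.2)) expand /= ?hq' ?hm' ?hy'; ring.
have eSmi : Pr P Smi = mm (false, true).
  by rewrite (prE mV pE (fun u => ~~ u.1.2.1 && u.1.2.2)) expand /= ?hq' ?hm' ?hy'; ring.
have eSma : Pr P Sma = mm (true, false).
  by rewrite (prE mV pE (fun u => u.1.2.1 && ~~ u.1.2.2)) expand /= ?hq' ?hm' ?hy'; ring.
have eSne : Pr P Sne = 1 - mm (true, true) - mm (true, false) - mm (false, true).
  by rewrite (prE mV pE (fun u => ~~ u.1.2.1 && ~~ u.1.2.2)) expand /= ?hq' ?hm' ?hy'; ring.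
have eM : Pr P [set t | M t] = q true * (mm (true, true) + mm (false, true)) + (1 - q true) * (mm (true, true) + mm (true, false)).
  by rewrite (prE mV pE (fun u => if u.1.1 then u.1.2.2 else u.1.2.1)) expand /= ?hq' ?hm' ?hy'; ring.
have eDM : Pr P [set t | D t && M t] = q true * (mm (true, true) + mm (false, true)).
  by rewrite (prE mV pE (fun u => u.1.1 && (if u.1.1 then u.1.2.2 else u.1.2.1))) expand /= ?hq' ?hm' ?hy'; ring.
have eD1 : pD1 = q true.
  by rewrite /pD1 (prE mV pE (fun u => u.1.1)) expand /= ?hq' ?hm' ?hy'; ring.
have eD0 : pD0 = 1 - q true.
  by rewrite /pD0 (prE mV pE (fun u => ~~ u.1.1)) expand /= ?hq' ?hm' ?hy'; ring.
have iSal : fine (\int[P]_(x in Sal) (tau x)%:E)%E = mm (true, true) * (yy (false, false, false, true) - yy (false, true, false, false)).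
  by rewrite (intE mV pE (fun u => u.1.2.1 && u.1.2.2) gtau) expand /gtau /= ?hq' ?hm' ?hy'; ring.
have iSmi : fine (\int[P]_(x in Smi) (tau x)%:E)%E = mm (false, true) * (yy (false, true, false, true) + yy (false, false, false, true)).
  by rewrite (intE mV pE (fun u => ~~ u.1.2.1 && u.1.2.2) gtau) expand /gtau /= ?hq' ?hm' ?hy'; ring.
have iSma : fine (\int[P]_(x in Sma) (tau x)%:E)%E = - (mm (true, false) * (yy (false, true, false, true) + yy (false, true, false, false))).
  by rewrite (intE mV pE (fun u => u.1.2.1 && ~~ u.1.2.2) gtau) expand /gtau /= ?hq' ?hm' ?hy'; ring.
have iSne : fine (\int[P]_(x in Sne) (tau x)%:E)%E = 0.
  by rewrite (intE mV pE (fun u => ~~ u.1.2.1 && ~~ u.1.2.2) gtau) expand /gtau /= ?hq' ?hm' ?hy'; ring.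
have iM : fine (\int[P]_(x in [set t | M t]) (tau x)%:E)%E =
    q true * (mm (true, true) * (yy (false, false, false, true) - yy (false, true, false, false)) + mm (false, true) * (yy (false, true, false, true) + yy (false, false, false, true))) + (1 - q true) * (mm (true, true) * (yy (false, false, false, true) - yy (false, true, false, false)) - mm (true, false) * (yy (false, true, false, true) + yy (false, true, false, false))).
  by rewrite (intE mV pE (fun u => if u.1.1 then u.1.2.2 else u.1.2.1) gtau) expand /gtau /= ?hq' ?hm' ?hy'; ring.
have iDM : fine (\int[P]_(x in [set t | D t && M t]) (tau x)%:E)%E =
    q true * (mm (true, true) * (yy (false, false, false, true) - yy (false, true, false, false)) + mm (false, true) * (yy (false, true, false, true) + yy (false, false, false, true))).
  by rewrite (intE mV pE (fun u => u.1.1 && (if u.1.1 then u.1.2.2 else u.1.2.1)) gtau) expand /gtau /= ?hq' ?hm' ?hy'; ring.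
have iD : fine (\int[P]_(x in [set t | D t]) (tau x)%:E)%E =
    q true * (mm (true, true) * (yy (false, false, false, true) - yy (false, true, false, false)) + mm (false, true) * (yy (false, true, false, true) + yy (false, false, false, true)) - mm (true, false) * (yy (false, true, false, true) + yy (false, true, false, false))).
  by rewrite (intE mV pE (fun u => u.1.1) gtau) expand /gtau /= ?hq' ?hm' ?hy'; ring.
have iT : fine (\int[P]_x (tau x)%:E)%E =
    mm (true, true) * (yy (false, false, false, true) - yy (false, true, false, false)) + mm (false, true) * (yy (false, true, false, true) + yy (false, false, false, true)) - mm (true, false) * (yy (false, true, false, true) + yy (false, true, false, false)).
  by rewrite (intT mV pE gtau) expand /gtau /= ?hq' ?hm' ?hy'; ring.
have ebM : betaM = mm (false, true) - mm (true, false).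
  by rewrite /betaM /Ex (intT mV pE (fun u => (u.1.2.2)%:R - (u.1.2.1)%:R)) expand /= ?hq' ?hm' ?hy'; ring.
have ebY : betaY = yy (false, false, false, true) - yy (false, true, false, false).
  by rewrite /betaY /Ex (intT mV pE (fun u => (u.2.2)%:R - (u.2.1.1.2)%:R)) expand /= ?hq' ?hm' ?hy'; ring.
have eY01 : EY01 = yy (false, true, false, true) + yy (false, true, false, false).
  by rewrite /EY01 /Ex (intT mV pE (fun u => (u.2.1.1.2)%:R)) expand /= ?hq' ?hm' ?hy'; ring.
rewrite /th1 /th2 /th3 /th4 ebM ebY eY01 /CondEx /Ex.
rewrite eSal eSmi eSma eSne eM eDM eD1 eD0 iSal iSmi iSma iSne iM iDM iD iT /wratio.
split; [|split; [|split; [|split; [|split; [|split; [|split; [|split]]]]]]].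
- move=> h; rewrite -[X in _ = X](mulfK (lt0r_neq0 h)); congr (_ * _); ring.
- move=> h; rewrite -[X in _ = X](mulfK (lt0r_neq0 h)); congr (_ * _); ring.
- move=> h; rewrite -[X in _ = X](mulfK (lt0r_neq0 h)); congr (_ * _); ring.
- move=> h; rewrite -[X in _ = X](mulfK (lt0r_neq0 h)); congr (_ * _); ring.
- ring.
- move=> _; congr (_ * _^-1); ring.
- move=> h.
  rewrite (_ : mm (true, true) + (mm (true, false) + (mm (false, true) - mm (true, false))) + 0 + 0 = mm (true, true) + mm (false, true)); last ring.
  have hS : mm (true, true) + mm (false, true) != 0.
    by apply/eqP => H0; move: h; rewrite H0 mulr0 ltxx.
  by apply/eqP; rewrite eqr_div ?(lt0r_neq0 h) //; apply/eqP; ring.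
- rewrite (_ : mm (true, true) + mm (false, true) + mm (true, false) + (1 - mm (true, true) - mm (true, false) - mm (false, true)) = 1); last ring.
  by rewrite divr1; ring.
- move=> h.
  rewrite (_ : mm (true, true) + mm (false, true) + mm (true, false) + (1 - mm (true, true) - mm (true, false) - mm (false, true)) = 1); last ring.
  rewrite divr1 -[X in _ = X](mulfK (lt0r_neq0 h)); congr (_ * _); ring.
Qed.
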